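(* Let $\mathcal F$ be a Hilbert space with norm-induced metric $d$, $(\phi_i)_{i\in\mathbb N}\subset\mathcal F$, $\pi:\mathbb N\to\mathbb N$ of at most polynomial growth, and $\Sigma^\pi_M=\{\sum_{i\in I}c_i\phi_i:I\subset\{1,\dots,\pi(M)\},|I|\le M,(c_i)\in\mathbb R^I\}$. For $\alpha,\beta>0$ let $$\mathcal A^\alpha(\mathcal F,\Sigma^\pi,\beta)=\{f\in\mathcal F:\|f\|\le\beta\ \text{and}\ \sup_{M\ge1}M^\alpha d(f,\Sigma^\pi_M)\le\beta\},$$ where $d(f,A)=\inf_{g\in A}d(f,g)$. Then $\gamma^*_e(\mathcal A^\alpha(\mathcal F,\Sigma^\pi,\beta))\ge\alpha$.
   Context: A finite $X\subset\mathcal C$ is an $\varepsilon$-covering of $\mathcal C$ if every point of $\mathcal C$ is within distance $\varepsilon$ of some point of $X$; $N(\mathcal C,d,\varepsilon)$ is the minimal size of such a covering ($+\infty$ if none), $H=\log_2N$, and the encoding speed is $\gamma^*_e(\mathcal C)=\sup\{\gamma>0:H(\mathcal C,d,\varepsilon)=O(\varepsilon^{-1/\gamma})\text{ as }\varepsilon\to0\}$ ($0$ if the set is empty). *)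

(* Defs.v *)
From HB Require Import structures.
From mathcomp Require Import all_boot all_order all_algebra.
From mathcomp Require Import finmap.
From mathcomp Require Import all_classical all_reals all_analysis.
Set Implicit Arguments. Unset Strict Implicit. Unset Printing Implicit Defensive.
Import Order.TTheory GRing.Theory Num.Theory.
Import numFieldNormedType.Exports.
Local Open Scope classical_set_scope.
Local Open Scope ring_scope.


(* A real Hilbert space: a complete normed space whose norm is induced by an
   inner product ip (symmetric, linear in the first argument, ||x||^2 = <x,x>). *)
Definition is_inner_product {R : realType} {V : normedModType R}
  (ip : V -> V -> R) : Prop :=
  [/\ forall x y, ip x y = ip y x,
      forall (a : R) x y z, ip (a *: x + y) z = a * ip x z + ip y z
    & forall x, `|x| ^+ 2 = ip x x].

Definition dist {R : realType} {V : normedModType R} (x y : V) : R := `|x - y|.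

Definition dist_set {R : realType} {V : normedModType R} (f : V) (A : set V) : R :=
  inf [set dist f g | g in A].

Definition is_covering {R : realType} {V : normedModType R}
  (C : set V) (eps : R) (X : {fset V}) : Prop :=
  [set` X] `<=` C /\ forall x, C x -> exists2 y, y \in X & dist x y <= eps.

(* covering number N(C, d, eps): minimal size of a covering, +oo if none *)
Definition covering_number {R : realType} {V : normedModType R}
  (C : set V) (eps : R) : \bar R :=
  ereal_inf [set ((#|` X |)%fset%:R : R)%:E | X in [set X : {fset V} | is_covering C eps X]].

Definition entropy {R : realType} {V : normedModType R}
  (C : set V) (eps : R) : \bar R :=
  match covering_number C eps with
  | EFin r => if r == 0 then -oo%E else (ln r / ln 2)%:E
  | y => y
  end.

Definition entropy_bigO {R : realType} {V : normedModType R}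
  (C : set V) (gamma : R) : Prop :=
  exists K : R, exists2 delta : R, 0 < delta &
    forall eps : R, 0 < eps -> eps < delta ->
      (entropy C eps <= (K * eps `^ (- gamma^-1))%:E)%E.

Definition encoding_speed {R : realType} {V : normedModType R}
  (C : set V) : \bar R :=
  if `[< C = set0 >] then 0%E
  else ereal_sup [set g%:E | g in [set g : R | 0 < g /\ entropy_bigO C g]].

Definition Sigma {R : realType} {V : normedModType R}
  (phi : nat -> V) (pi : nat -> nat) (M : nat) : set V :=
  [set g | exists I : {fset nat},
     [/\ forall i, i \in I -> (1 <= i <= pi M)%N,
         (#|` I |%fset <= M)%N
       & exists c : nat -> R, g = \sum_(i <- I) c i *: phi i]].

Definition approx_class {R : realType} {V : normedModType R}
  (phi : nat -> V) (pi : nat -> nat) (alpha beta : R) : set V :=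
  [set f | `|f| <= beta /\
     forall M : nat, (1 <= M)%N -> (M%:R `^ alpha) * dist_set f (Sigma phi pi M) <= beta].

Definition poly_growth (pi : nat -> nat) : Prop :=
  exists C k : nat, forall n, (1 <= n)%N -> (pi n <= C * n ^ k)%N.

(* Main.v *)
Require Import Defs.
From HB Require Import structures.
From mathcomp Require Import all_boot all_order all_algebra.
From mathcomp Require Import finmap.
From mathcomp Require Import all_classical all_reals all_analysis.
From mathcomp Require Import ring lra.
Import Order.TTheory GRing.Theory Num.Theory.
Import numFieldNormedType.Exports.
Local Open Scope classical_set_scope.
Local Open Scope ring_scope.
Section IP.
Variables (R : realType) (V : normedModType R) (ip : V -> V -> R).
Hypothesis Hip : is_inner_product ip.

Lemma ipC x y : ip x y = ip y x. Proof. by case: Hip. Qed.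
Lemma ipDZl a x y z : ip (a *: x + y) z = a * ip x z + ip y z. Proof. by case: Hip. Qed.
Lemma ipnorm x : `|x| ^+ 2 = ip x x. Proof. by case: Hip. Qed.
Lemma ip0l z : ip 0 z = 0.
Proof. have := ipDZl 1 0 0 z; rewrite scaler0 addr0 mul1r; lra. Qed.
Lemma ip0r z : ip z 0 = 0. Proof. by rewrite ipC ip0l. Qed.
Lemma ipZl a x z : ip (a *: x) z = a * ip x z.
Proof. by have := ipDZl a x 0 z; rewrite addr0 ip0l addr0. Qed.
Lemma ipDl x y z : ip (x + y) z = ip x z + ip y z.
Proof. by have := ipDZl 1 x y z; rewrite scale1r mul1r. Qed.
Lemma ipNl x z : ip (- x) z = - ip x z.
Proof. by rewrite -scaleN1r ipZl mulN1r. Qed.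
Lemma ipZr a x z : ip z (a *: x) = a * ip z x.
Proof. by rewrite ipC ipZl ipC. Qed.
Lemma ip_suml (I : Type) (r : seq I) (P : pred I) (a : I -> R) (x : I -> V) z :
  ip (\sum_(i <- r | P i) a i *: x i) z = \sum_(i <- r | P i) a i * ip (x i) z.
Proof.
apply: (big_rec2 (fun y1 y2 => ip y1 z = y2)); first exact: ip0l.
by move=> i y1 y2 _ <-; rewrite ipDZl.
Qed.
Lemma ip_sumr (I : Type) (r : seq I) (P : pred I) (a : I -> R) (x : I -> V) z :
  ip z (\sum_(i <- r | P i) a i *: x i) = \sum_(i <- r | P i) a i * ip z (x i).
Proof. by rewrite ipC ip_suml; apply: eq_bigr => i _; rewrite ipC. Qed.

Definition orthoF (n : nat) (e : nat -> V) :=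
  (forall j, e j = 0 \/ `|e j| = 1) /\
  (forall i j, (i < n)%N -> (j < n)%N -> i != j -> ip (e i) (e j) = 0).

Lemma ipnn_idem e : (e = 0 \/ `|e| = 1) -> forall v, ip v e * ip e e = ip v e.
Proof. case=> [->|h] v; first by rewrite ip0r mul0r.
by rewrite -ipnorm h expr1n mulr1. Qed.

Lemma sum_proj n e (oe : orthoF n e) v k : (k < n)%N ->
  \sum_(j < n) ip v (e j) * ip (e j) (e k) = ip v (e k).
Proof.
move=> kn; rewrite (bigD1 (Ordinal kn)) //= big1 ?addr0.
  by apply: ipnn_idem; case: oe.
move=> j nj; case: oe => _ ->; rewrite ?mulr0 //.
Qed.

Lemma gram_schmidt n (w : nat -> V) : exists e : nat -> V, orthoF n e /\
  forall c : nat -> R, exists a : nat -> R,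
    \sum_(j < n) c j *: w j = \sum_(j < n) a j *: e j.
Proof.
elim: n => [|n [e [oe sp]]].
  exists (fun _ => 0); split.
    by split=> [j|//]; left.
  by move=> c; exists (fun _ => 0); rewrite !big_ord0.
pose u := w n - \sum_(j < n) ip (w n) (e j) *: e j.
pose e0 := if u == 0 then 0 else `|u|^-1 *: u.
have ue0 : u = `|u| *: e0.
  rewrite /e0; case: eqP => [->|/eqP h]; first by rewrite scaler0.
  by rewrite scalerA divff ?scale1r ?normr_eq0.
have e0n : e0 = 0 \/ `|e0| = 1.
  rewrite /e0; case: eqP => [_|/eqP h]; [by left|right].
  by rewrite normrZ normrV ?unitfE ?normr_eq0 // normr_id mulVf ?normr_eq0.
have ue : forall k, (k < n)%N -> ip u (e k) = 0.
  by move=> k kn; rewrite /u ipDl ipNl ip_suml sum_proj // subrr.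
have e0e : forall k, (k < n)%N -> ip e0 (e k) = 0.
  move=> k kn; rewrite /e0; case: eqP => _; first by rewrite ip0l.
  by rewrite ipZl ue // mulr0.
pose e' := fun j => if j == n then e0 else e j.
exists e'; split.
  split.
    by move=> j; rewrite /e'; case: eqP => _ //; case: oe.
  move=> i j; rewrite !ltnS /e' => ilt jlt ij.
  case: eqP => [iE|/eqP iN]; case: eqP => [jE|/eqP jN].
  - by move: ij; rewrite iE jE eqxx.
  - by apply: e0e; rewrite ltn_neqAle jN jlt.
  - by rewrite ipC; apply: e0e; rewrite ltn_neqAle iN ilt.
  - by case: oe => _ ->; rewrite // ltn_neqAle ?iN ?jN.
move=> c; have [a ha] := sp c.
exists (fun j => if j == n then c n * `|u| else c n * ip (w n) (e j) + a j).
rewrite !big_ord_recr /= ha /e' eqxx.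
have wE : w n = `|u| *: e0 + \sum_(j < n) ip (w n) (e j) *: e j.
  by rewrite -ue0 /u subrK.
rewrite [in c n *: w n]wE.
rewrite scalerDr scalerA scaler_sumr.
rewrite addrCA [RHS]addrC; congr (_ + _); rewrite -big_split /=.
apply: eq_bigr => j _; rewrite (ltn_eqF (ltn_ord j)) scalerA -scalerDl.
by rewrite addrC.
Qed.

Lemma pythag n e (oe : orthoF n e) (a : nat -> R) :
  `|\sum_(j < n) a j *: e j| ^+ 2 = \sum_(j < n) a j ^+ 2 * `|e j| ^+ 2.
Proof.
rewrite ipnorm ip_suml; apply: eq_bigr => i _.
rewrite ip_sumr (bigD1 i) //= big1 ?addr0.
  by rewrite ipnorm mulrA expr2.
move=> j nj; case: oe => _ ->; rewrite ?mulr0 //.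
by apply: contraNneq nj => h; apply/eqP/val_inj.
Qed.

Lemma coef_bound n e (oe : orthoF n e) (a : nat -> R) : exists b : nat -> R,
  \sum_(j < n) a j *: e j = \sum_(j < n) b j *: e j /\
  forall j, `|b j| <= `|\sum_(j < n) a j *: e j|.
Proof.
exists (fun j => if (j < n)%N && (e j != 0) then a j else 0); split.
  apply: eq_bigr => j _; rewrite ltn_ord /=; case: eqP => [->|//].
  by rewrite !scaler0.
move=> j; case: ifP => [/andP [jn ej]|_]; last by rewrite normr0 normr_ge0.
have e1 : `|e j| = 1 by case: oe => /(_ j) [/eqP h|//]; move: ej; rewrite h.
have h : a j ^+ 2 <= `|\sum_(j < n) a j *: e j| ^+ 2.
  rewrite pythag // (bigD1 (Ordinal jn)) //= e1 expr1n mulr1 lerDl.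
  by apply: sumr_ge0 => i _; rewrite mulr_ge0 // sqr_ge0.
rewrite -(ler_pXn2r (n:=2)) ?nnegrE ?normr_ge0 //.
by rewrite real_normK ?num_real.
Qed.

End IP.
Arguments orthoF {R V}.
Arguments coef_bound {R V ip}.
Arguments gram_schmidt {R V ip}.
Section Grid.
Variables (R : realType) (V : normedModType R).

Lemma grid (n : nat) (e : nat -> V) (he : forall j, `|e j| <= 1) (b : nat -> R)
  (r h : R) (N : nat) (hh : 0 < h) (hN : r <= N%:R * h) (hb : forall j, `|b j| <= r) :
  exists q : {ffun 'I_n -> 'I_(N.*2.+1)},
   `|\sum_(j < n) b j *: e j - \sum_(j < n) (h * ((q j)%:R - N%:R)) *: e j| <= n%:R * h.
Proof.
pose t j := Num.truncn (b j / h + N%:R).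
have y0 : forall j, 0 <= b j / h + N%:R.
  move=> j; have := hb j; rewrite ler_norml => /andP [h1 _].
  rewrite -(ler_pM2r hh) mul0r mulrDl mulfVK; last by rewrite lt0r_neq0.
  lra.
have y2 : forall j, b j / h + N%:R <= (N.*2)%:R.
  move=> j; have := hb j; rewrite ler_norml => /andP [_ h1].
  rewrite -(ler_pM2r hh) mulrDl mulfVK; last by rewrite lt0r_neq0.
  rewrite -muln2 natrM; lra.
have tle : forall j, (t j < N.*2.+1)%N.
  move=> j; rewrite ltnS -(ler_nat R); apply: le_trans (y2 j).
  by have /andP [] := truncn_itv (y0 j).
exists [ffun j : 'I_n => inord (t j)].
have err : forall j : 'I_n, `|b j - h * (((([ffun j : 'I_n => inord (t j)] : {ffun 'I_n -> 'I_(N.*2.+1)}) j) : nat)%:R - N%:R)| <= h.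
  move=> j; rewrite ffunE inordK //.
  have /andP [t1 t2] := truncn_itv (y0 j); rewrite -/(t j) in t1 t2.
  have -> : b j - h * ((t j)%:R - N%:R) = h * (b j / h + N%:R - (t j)%:R).
    by field; rewrite lt0r_neq0.
  rewrite normrM gtr0_norm // ger0_norm ?subr_ge0 // ler_piMr //.
  by rewrite ltW.
  move: t2; rewrite -natr1; lra.
rewrite -sumrB (le_trans (ler_norm_sum _ _ _)) //.
have -> : n%:R * h = \sum_(j < n) h.
  by rewrite sumr_const card_ord mulr_natl.
apply: ler_sum => j _; rewrite -scalerBl normrZ.
rewrite -[X in _ <= X]mulr1; apply: ler_pM; by rewrite ?normr_ge0 ?err ?he.
Qed.

End Grid.
Arguments grid {R V n e}.
Section Cover.
Variables (R : realType) (F : normedModType R) (ip : F -> F -> R).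
Hypothesis Hip : is_inner_product ip.
Variables (phi : nat -> F) (pi : nat -> nat) (alpha beta : R).
Hypothesis Hbeta : 0 < beta.

Lemma dist_ge0 (x y : F) : 0 <= dist x y. Proof. exact: normr_ge0. Qed.

Lemma dist_set_props (f : F) S g : S g -> 0 <= dist_set f S /\ dist_set f S <= dist f g.
Proof.
move=> Sg; have lb : lbound [set dist f g | g in S] 0 by move=> _ [h _ <-]; exact: dist_ge0.
split; first by apply: lb_le_inf => //; exists (dist f g); exists g.
by apply: ge_inf; [exists 0|exists g].
Qed.

Lemma dist_set_lt (f : F) S g0 (e : R) : S g0 -> 0 < e ->
  exists2 g, S g & dist f g < dist_set f S + e.
Proof.
move=> Sg e0; have hi : has_inf [set dist f g | g in S].
  by split; [exists (dist f g0), g0|exists 0 => _ [h _ <-]; exact: dist_ge0].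
by have [_ [g Sg1 <-] lt] := inf_adherent e0 hi; exists g.
Qed.

Lemma Sigma0 M : Sigma phi pi M 0.
Proof.
exists fset0; split => //; exists (fun _ => 0).
by rewrite big1 // => i _; rewrite scale0r.
Qed.

Lemma C0 : approx_class phi pi alpha beta 0.
Proof.
split; first by rewrite normr0 ltW.
move=> M _; have [h1 h2] := @dist_set_props 0 _ _ (Sigma0 M).
have -> : dist_set 0 (Sigma phi pi M) = 0.
  by apply: le_anti; rewrite h1 andbT; move: h2; rewrite /dist subrr normr0.
by rewrite mulr0 ltW.
Qed.

Lemma sigma_repr M' g : Sigma phi pi M'.+1 g ->
  exists t : {ffun 'I_M'.+1 -> 'I_(pi M'.+1).+1}, exists c : nat -> R,
    g = \sum_(j < M'.+1) c j *: phi (t (inord j)).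
Proof.
case=> I [hI hc [c ->]].
exists [ffun k : 'I_M'.+1 => inord (nth 0%N I k)].
exists (fun j => if (j < size I)%N then c (nth 0%N I j) else 0).
rewrite (big_nth 0%N) big_mkord.
rewrite (big_ord_widen M'.+1 (fun j => c (nth 0%N I j) *: phi (nth 0%N I j))) //.
rewrite big_mkcond; apply: eq_bigr => j _.
case: ifP => h; last by rewrite scale0r.
rewrite inord_val ffunE inordK //.
by have /hI /andP [_ ] := mem_nth 0%N h; rewrite ltnS.
Qed.

End Cover.
Arguments dist_set_lt {R F}.
Arguments Sigma0 {R F}.
Arguments C0 {R F}.
Arguments sigma_repr {R F phi pi M' g}.
Section Cover2.
Variables (R : realType) (F : normedModType R) (ip : F -> F -> R).
Hypothesis Hip : is_inner_product ip.
Variables (phi : nat -> F) (pi : nat -> nat) (alpha beta : R).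
Hypothesis Hbeta : 0 < beta.

Lemma cover (M' N : nat) (eps : R) (e0 : 0 < eps) (e1 : eps <= 1)
  (hM : beta / (M'.+1)%:R `^ alpha <= eps / 8)
  (hN : beta + 1 <= N%:R * (eps / (4 * (M'.+1)%:R))) :
  exists X : {fset F}, is_covering (approx_class phi pi alpha beta) eps X /\
    (#|` X| <= (pi M'.+1).+1 ^ M'.+1 * (N.*2.+1) ^ M'.+1)%N.
Proof.
set M := M'.+1 in hM hN *. set P := pi M. set h := eps / (4 * M%:R) in hN.
have M0 : 0 < M%:R :> R by rewrite ltr0n.
have h0 : 0 < h by rewrite /h divr_gt0 // mulr_gt0.
have Mh : M%:R * h = eps / 4 by rewrite /h; field; rewrite lt0r_neq0.
have GS : forall t : {ffun 'I_M -> 'I_P.+1}, {e : nat -> F | orthoF ip M e /\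
    forall c : nat -> R, exists a : nat -> R,
      \sum_(j < M) c j *: phi (t (inord j)) = \sum_(j < M) a j *: e j}.
  by move=> t; exact: cid (gram_schmidt Hip M (fun j => phi (t (inord j)))).
pose E t := proj1_sig (GS t).
pose Phi (d : ({ffun 'I_M -> 'I_P.+1} * {ffun 'I_M -> 'I_(N.*2.+1)})%type) := \sum_(j < M) (h * ((d.2 j)%:R - N%:R)) *: E d.1 j.
pose C := approx_class phi pi alpha beta.
pose psi (d : ({ffun 'I_M -> 'I_P.+1} * {ffun 'I_M -> 'I_(N.*2.+1)})%type) := xget 0 [set c | C c /\ dist c (Phi d) <= eps / 2].
have psiC d : C (psi d).
  rewrite /psi; have [[x hx]|nx] := pselect (exists x, C x /\ dist x (Phi d) <= eps/2).
    have hx' : exists y, [set c | C c /\ dist c (Phi d) <= eps / 2] y by exists x.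
    by have [] := xgetPex 0 hx'.
  rewrite xgetPN; first exact: (C0 phi pi alpha beta Hbeta).
  by move=> x hx; apply: nx; exists x.
have main : forall f, C f -> exists d : ({ffun 'I_M -> 'I_P.+1} * {ffun 'I_M -> 'I_(N.*2.+1)})%type, dist f (Phi d) <= eps / 2.
  move=> f [nf hf].
  have Ma0 : 0 < M%:R `^ alpha by rewrite powR_gt0.
  have hds : dist_set f (Sigma phi pi M) <= eps / 8.
    apply: le_trans hM; rewrite ler_pdivlMr // mulrC; exact: hf.
  have e8 : 0 < eps / 8 by rewrite divr_gt0.
  have [g Sg dg] := dist_set_lt f _ _ _ (Sigma0 phi pi M) e8.
  have dg4 : dist f g < eps / 4 by apply: (lt_le_trans dg); lra.
  have [t [c gE]] := sigma_repr Sg.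
  have [oe sp] := proj2_sig (GS t).
  have [a ha] := sp c.
  have [b [hb1 hb2]] := coef_bound Hip _ _ oe a.
  have gb : `|g| <= beta + 1.
    have := ler_normD (g - f) f; rewrite subrK distrC.
    move: dg4; rewrite /dist; lra.
  have he : forall j, `|E t j| <= 1.
    by move=> j; rewrite /E; case: oe => /(_ j) [->|->] _; rewrite ?normr0 ?ler01.
  have hb : forall j, `|b j| <= beta + 1.
    by move=> j; apply: le_trans (hb2 j) _; rewrite -ha -gE.
  have [q hq] := @grid _ _ M _ he b (beta + 1) h N h0 hN hb.
  exists (t, q); rewrite /dist /Phi /=.
  apply: le_trans (ler_distD g f _) _.
  rewrite gE ha hb1; move: hq; rewrite Mh; move: dg4; rewrite /dist gE ha hb1; lra.
exists [fset x in map psi (enum {: ({ffun 'I_M -> 'I_P.+1} * {ffun 'I_M -> 'I_(N.*2.+1)})%type})]%fset; split; last first.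
  rewrite card_fseq; apply: leq_trans (size_undup _) _.
  by rewrite size_map -cardE card_prod !card_ffun !card_ord.
split.
  by move=> x /=; rewrite inE => /mapP [d _ ->]; exact: psiC.
move=> x Cx; have [d hd] := main x Cx.
have hx : exists y, [set c | C c /\ dist c (Phi d) <= eps / 2] y by exists x.
have [_ hpsi] := xgetPex 0 hx.
exists (psi d); first by rewrite inE; apply: map_f; rewrite mem_enum.
rewrite /dist; apply: le_trans (ler_distD (Phi d) x (psi d)) _.
move: hd hpsi; rewrite /dist /psi (distrC (Phi d)); lra.
Qed.

End Cover2.
Lemma entropy_le (R : realType) (V : normedModType R) (C : set V) eps
  (X : {fset V}) (T : nat) : is_covering C eps X -> (#|` X| <= T)%N -> (0 < T)%N ->
  (entropy C eps <= (ln (T%:R : R) / ln 2)%:E)%E.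
Proof.
move=> cov XT T0.
have hcn : (covering_number C eps <= ((#|` X|)%fset%:R : R)%:E)%E.
  by apply: ereal_inf_lbound; exists X.
have hge : (0 <= covering_number C eps)%E.
  by apply: le_ereal_inf_tmp => _ [Y _ <-]; rewrite lee_fin ler0n.
rewrite /entropy; move: hcn hge; case: (covering_number C eps) => [r| |] //.
rewrite !lee_fin => h1 h2; case: eqP => [_|/eqP r0]; first by rewrite leNye.
have ln2 : 0 < ln (2 : R) by apply: ln_gt0; rewrite ltr1n.
rewrite lee_fin ler_pM2r ?invr_gt0 // ler_ln ?posrE ?ltr0n //.
  by apply: le_trans h1 _; rewrite ler_nat.
by rewrite lt0r r0 h2.
Qed.
Section Main.
Variables (R : realType) (F : normedModType R) (ip : F -> F -> R).
Hypothesis Hip : is_inner_product ip.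
Variables (phi : nat -> F) (pi : nat -> nat).
Hypothesis Hpi : poly_growth pi.
Variables (alpha beta : R).
Hypotheses (Halpha : 0 < alpha) (Hbeta : 0 < beta).

Lemma bigO_g (g : R) (g0 : 0 < g) (ga : g < alpha) :
  entropy_bigO (approx_class phi pi alpha beta) g.
Proof.
have [Cp [kp hpi]] := Hpi.
have hb := Hbeta; have ha := Halpha.
set cA := (8 * beta) `^ alpha^-1.
set A := cA + 1.
set r := beta + 1.
set th := alpha / g - 1.
have th0 : 0 < th by rewrite subr_gt0 ltr_pdivlMr // mul1r.
have cA0 : 0 <= cA by apply: powR_ge0.
have ln2 : 0 < ln (2 : R) by apply: ln_gt0; rewrite ltr1n.
have lnA : 0 <= ln A by apply: ln_ge0; rewrite /A lerDr.
have lnC : 0 <= ln ((Cp.+1)%:R : R) by apply: ln_ge0; rewrite ler1n.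
have ln8 : 0 <= ln (8 * r + 3).
  by apply: ln_ge0; rewrite /r; lra.
set c1 := ln ((Cp.+1)%:R : R) + ln (8 * r + 3) + (kp.+1)%:R * ln A.
set c2 := (kp.+1)%:R + alpha.
have c10 : 0 <= c1 by rewrite /c1 !addr_ge0 // mulr_ge0.
have c20 : 0 <= c2 by rewrite /c2 addr_ge0 // ltW.
exists (A * (c1 + c2 / th) / ln 2); exists 1 => // eps e0 e1.
set y := eps `^ (- alpha^-1).
have yal : y `^ alpha = eps^-1.
  by rewrite /y -powRrM mulNr mulVf ?lt0r_neq0 // powR_inv1 // ltW.
have yag : y `^ (alpha / g) = eps `^ (- g^-1).
  by rewrite /y -powRrM; congr powR; field; rewrite !lt0r_neq0.
have y1 : 1 <= y.
  rewrite /y powRN invf_ge1 ?powR_gt0 //.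
  have ai : 0 < alpha^-1 by rewrite invr_gt0.
  have := @ge0_ler_powR R alpha^-1 (ltW ai) eps 1.
  by rewrite powR1 !nnegrE ler01 (ltW e0) (ltW e1) => ->.
have y0 : 0 < y by lra.
set z := cA * y.
have z0 : 0 <= z by rewrite mulr_ge0 // ltW.
set M' := Num.truncn z.
set M := M'.+1.
have zM : z < M%:R by apply: truncnS_gt.
have MA : M%:R <= A * y.
  have := truncn_itv z0; rewrite -/M' => /andP [h _].
  rewrite /M -natr1 /A mulrDl mul1r; move: h y1; rewrite /z; lra.
have M1 : 1 <= M%:R :> R by rewrite ler1n.
have hM : beta / M%:R `^ alpha <= eps / 8.
  have Ma : 8 * beta / eps <= M%:R `^ alpha.
    have -> : 8 * beta / eps = z `^ alpha.
      rewrite /z powRM ?(ltW y0) // yal /cA -powRrM mulVf ?lt0r_neq0 //.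
      by rewrite powRr1 // mulr_ge0 // ltW.
    apply: ge0_ler_powR; rewrite ?nnegrE ?(ltW Halpha) ?ler0n //; exact: ltW.
  have Ma0 : 0 < M%:R `^ alpha by rewrite powR_gt0 // ltr0n.
  rewrite ler_pdivrMr //; apply: le_trans (ler_wpM2l _ Ma); last by rewrite divr_ge0 // ltW.
  by rewrite le_eqVlt; apply/orP; left; apply/eqP; field; rewrite lt0r_neq0.
set h := eps / (4 * M%:R).
have h0 : 0 < h by rewrite /h divr_gt0 // mulr_gt0 // ltr0n.
set N' := Num.truncn (r / h).
set N := N'.+1.
have rh0 : 0 <= r / h by rewrite divr_ge0 // /r; lra.
have hN : r <= N%:R * h.
  by rewrite -ler_pdivrMr //; apply: ltW; apply: truncnS_gt.
have Nle : N%:R <= 4 * r * M%:R / eps + 1.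
  have := truncn_itv rh0; rewrite -/N' => /andP [hh _].
  rewrite /N -natr1 lerD2r; apply: le_trans hh _.
  by rewrite le_eqVlt; apply/orP; left; apply/eqP; rewrite /h; field; rewrite !lt0r_neq0 ?ltr0n.
have [X [cov cardX]] := @cover R F ip Hip phi pi alpha beta Hbeta _ _ _ e0 (ltW e1) hM hN.
set P := pi M.
set T := ((P.+1) ^ M * (N.*2.+1) ^ M)%N.
have T0 : (0 < T)%N by rewrite /T muln_gt0 !expn_gt0.
apply: (le_trans (@entropy_le _ _ _ _ _ _ cov cardX T0)).
rewrite lee_fin -yag [X in _ <= X]mulrAC ler_pM2r ?invr_gt0 //.
(* now: ln T <= A * (c1 + c2/th) * y `^ (alpha / g) *)
have x1 : 1 <= eps^-1 by rewrite invf_ge1 // ltW.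
have lnT : ln (T%:R : R) = M%:R * (ln ((P.+1)%:R : R) + ln ((N.*2.+1)%:R : R)).
  rewrite /T natrM !natrX lnM ?posrE ?exprn_gt0 ?ltr0n // !lnXn ?ltr0n //.
  by rewrite -mulrnDl mulr_natl.
have hP : ((P.+1)%:R : R) <= (Cp.+1)%:R * M%:R ^+ kp.
  rewrite -natrX -natrM ler_nat; have := hpi M isT; rewrite -/P => hp.
  by rewrite mulSn -add1n leq_add // expn_gt0.
have l1 : ln ((P.+1)%:R : R) <= ln ((Cp.+1)%:R : R) + kp%:R * ln (M%:R : R).
  have -> : kp%:R * ln (M%:R : R) = ln (M%:R ^+ kp) by rewrite lnXn ?ltr0n // mulr_natl.
  rewrite -lnM ?posrE ?exprn_gt0 ?ltr0n //.
  by rewrite ler_ln ?posrE ?mulr_gt0 ?exprn_gt0 ?ltr0n.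
have hN2 : ((N.*2.+1)%:R : R) <= (8 * r + 3) * M%:R * eps^-1.
  rewrite -addn1 -muln2 natrD natrM.
  have q1 : 1 <= M%:R / eps :> R.
    rewrite -[X in X <= _]mulr1; apply: ler_pM; rewrite ?ler01 //.
  have E1 : (8 * r + 3) * M%:R / eps = (8 * r + 3) * (M%:R / eps) by rewrite mulrA.
  have E2 : 4 * r * M%:R / eps = 4 * r * (M%:R / eps) by rewrite mulrA.
  rewrite E1; rewrite E2 in Nle.
  have r0 : 0 <= r by rewrite /r; lra.
  move: Nle q1 r0; set q := M%:R / eps; nra.
have l2 : ln ((N.*2.+1)%:R : R) <= ln (8 * r + 3) + ln (M%:R : R) + ln (eps^-1).
  rewrite -lnM ?posrE ?ltr0n ?invr_gt0 //; last by rewrite /r; lra.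
  rewrite -lnM ?posrE ?mulr_gt0 ?ltr0n ?invr_gt0 //; last by rewrite /r; lra.
  rewrite ler_ln ?posrE ?ltr0n // ?mulr_gt0 ?ltr0n ?invr_gt0 //; rewrite /r; lra.
have lM : ln (M%:R : R) <= ln A + ln y.
  by rewrite -lnM ?posrE // ?ler_ln ?posrE ?ltr0n ?mulr_gt0 //; rewrite /A; lra.
have lx : ln (eps^-1) = alpha * ln y by rewrite -yal ln_powR.
set yt := y `^ th.
have yt1 : 1 <= yt by rewrite /yt -(powRr0 y) ler_powR // ltW.
have ly : ln y <= yt / th.
  rewrite ler_pdivlMr // mulrC -ln_powR; apply: ltW; apply: ln_sublinear; exact: powR_gt0.
have YE : y `^ (alpha / g) = y * yt.
  by rewrite /yt -{2}(powRr1 (ltW y0)) -powRD ?lt0r_neq0 ?orbT ?implybT //; congr powR; rewrite /th; ring.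
have lnP0 : 0 <= ln ((P.+1)%:R : R) by apply: ln_ge0; rewrite ler1n.
have lnN0 : 0 <= ln ((N.*2.+1)%:R : R) by apply: ln_ge0; rewrite ler1n.
have br : ln ((P.+1)%:R : R) + ln ((N.*2.+1)%:R : R) <= (c1 + c2 / th) * yt.
  have lyb : ln y <= yt / th := ly.
  have e2 : ln ((P.+1)%:R : R) + ln ((N.*2.+1)%:R : R) <= c1 + c2 * ln y.
    have kp0 : 0 <= kp%:R :> R by rewrite ler0n.
    have := ler_wpM2l kp0 lM.
    rewrite /c1 /c2.
    have -> : (kp.+1)%:R = kp%:R + 1 :> R by rewrite natr1.
    move: l1 l2 lM; rewrite lx.
    lra.
  apply: le_trans e2 _.
  clearbody c1 c2.
  have h4 : c2 * ln y <= c2 * (yt / th) by rewrite ler_wpM2l.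
  have h3 : c1 <= c1 * yt by rewrite ler_peMr.
  have E : c2 / th * yt = c2 * (yt / th) by rewrite mulrAC -mulrA.
  rewrite mulrDl E; lra.
rewrite lnT YE.
have b0 : 0 <= ln ((P.+1)%:R : R) + ln ((N.*2.+1)%:R : R) by rewrite addr_ge0.
have := ler_pM (ler0n _ M) b0 MA br.
by rewrite !mulrA [A * y * _]mulrAC.
Qed.

End Main.
Theorem mainTheorem16 (R : realType) (F : completeNormedModType R)
  (ip : F -> F -> R) (Hip : is_inner_product ip)
  (phi : nat -> F) (pi : nat -> nat) (Hpi : poly_growth pi)
  (alpha beta : R) (Halpha : 0 < alpha) (Hbeta : 0 < beta) :
  (alpha%:E <= encoding_speed (approx_class phi pi alpha beta))%E.
Proof.
have BO : forall g, 0 < g -> g < alpha ->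
    entropy_bigO (approx_class phi pi alpha beta) g.
  by move=> g g0 ga; exact: (@bigO_g R F ip Hip phi pi Hpi alpha beta Halpha Hbeta g g0 ga).
have C0' := C0 phi pi alpha beta Hbeta.
rewrite /encoding_speed; case: asboolP => [hC|_].
  by rewrite hC in C0'.
set S := [set _%:E | _ in _].
have ub : forall g, 0 < g -> g < alpha -> (g%:E <= ereal_sup S)%E.
  by move=> g g0 ga; apply: ereal_sup_ubound; exists g => //; split => //; exact: BO.
case E: (ereal_sup S) => [s| |]; last 2 first.
- exact: leey.
- have := ub (alpha / 2); rewrite E; apply => //; lra.
rewrite lee_fin; rewrite E in ub.
have [s0|s0] := lerP s 0.
  have := ub (alpha / 2); rewrite lee_fin; move=> h; have := h ltac:(lra) ltac:(lra); lra.
rewrite leNgt; apply/negP => sa.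
have := ub ((s + alpha) / 2); rewrite lee_fin => h; have := h ltac:(lra) ltac:(lra); lra.
Qed.
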